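(* Every system execution $M$ (in the sense of the context) that satisfies the Lazy Set axioms A0, A1, A2 is linearizable: there is a linear ordering $<_0$ of the events of $M$ extending $<^M$ such that $<_0$ together with $\gamma^M$ satisfies FS0, FS1 and FS2.
   Context: A system execution $M$ consists of: a set of events, partitioned into low-level events (actions) and high-level events; unary predicates $\mathrm{Add},\mathrm{Rem},\mathrm{Cnt}$ on events; a binary relation $<$ (temporal precedence) on events which is a partial order such that every event has only finitely many predecessors, and moreover Lamport's finiteness property holds: for every event $x$ there is a finite set $E$ such that every event $y\notin E$ satisfies $x<y$; functions $\mathrm{Begin},\mathrm{End}$ from events to actions, with $\mathrm{Begin}(e)=\mathrm{End}(e)=e$ for every action $e$; functions $\chi$ from events to $\{0,1,f\}$, $\mathrm{val}$ from events to $\mathbb N$, and $\gamma$ from events to events. The order on all events is determined by the order on actions: for events $X,Y$ (actions or high-level), $X<Y$ iff $\mathrm{End}(X)<\mathrm{Begin}(Y)$. Notation: for $p\in\{0,1,f\}$, $\mathrm{Add}^p(a)$ abbreviates $\mathrm{Add}(a)\wedge\chi(a)=p$, and $\mathrm{Rem}^p,\mathrm{Cnt}^p$ similarly; for $p\in\{0,1\}$, $\mathrm{Op}^p(a)$ abbreviates $(\mathrm{Add}(a)\vee\mathrm{Rem}(a)\vee\mathrm{Cnt}(a))\wedge\chi(a)=p$. Lazy Set axioms: A0: $\mathrm{Add},\mathrm{Rem},\mathrm{Cnt}$ are pairwise disjoint; $\mathrm{Add}$ and $\mathrm{Rem}$ events are actions and $\mathrm{Cnt}$ events are high-level events; for every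 event $X$, $\mathrm{Begin}(X)$ and $\mathrm{End}(X)$ are actions; for $\mathrm{Cnt}$ events $E$, $\mathrm{Begin}(E)<\mathrm{End}(E)$; restricted to actions, $<$ is a linear ordering. A1: for every event $A$ with $\mathrm{Op}^1(A)$: $\mathrm{Add}^0(\gamma(A))$, $\mathrm{val}(\gamma(A))=\mathrm{val}(A)$, $\gamma(A)<\mathrm{End}(A)$, and there is no event $R$ with $\mathrm{Rem}^1(R)$, $\gamma(R)=\gamma(A)$ and $\gamma(A)<R<A$. A2: for all events $A,B$: if $\mathrm{Op}^0(B)$, $\mathrm{Add}^0(A)$, $A<B$ and $\mathrm{val}(A)=\mathrm{val}(B)$, then there is an event $R$ with $\mathrm{Rem}^1(R)$, $A=\gamma(R)$ and $R<\mathrm{End}(B)$. Linear specification (for a linear order $<_0$ and function $\gamma$): FS0: $<_0$ is a linear ordering of the events; $\mathrm{Add},\mathrm{Rem},\mathrm{Cnt}$ are pairwise disjoint; $\gamma$ is defined on the $\mathrm{Op}^1$ events and its values are $\mathrm{Add}^0$ events. FS1: for every event $a$ with $\mathrm{Op}^1(a)$: $\gamma(a)<_0 a$, $\mathrm{Add}^0(\gamma(a))$, $\mathrm{val}(a)=\mathrm{val}(\gamma(a))$, and there is no event $r$ with $\mathrm{Rem}^1(r)$, $\gamma(r)=\gamma(a)$ and $\gamma(a)<_0 r<_0 a$. FS2: for all events $a<_0b$ with $\mathrm{Add}^0(a)$ and $\mathrm{Op}^0(b)$: if $\mathrm{val}(a)=\mathrm{val}(b)$ then there is an event $r$ with $a<_0r<_0b$,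 $\mathrm{Rem}^1(r)$ and $a=\gamma(r)$. *)

(* Defs.v *)
From Stdlib Require Import List.

Inductive chiv : Type := C0 | C1 | Cf.

Record Exec : Type := {
  Ev : Type;
  Action : Ev -> Prop;          (* low-level events; others are high-level *)
  Add : Ev -> Prop;
  Rem : Ev -> Prop;
  Cnt : Ev -> Prop;
  lt : Ev -> Ev -> Prop;
  Begin : Ev -> Ev;
  End : Ev -> Ev;
  chi : Ev -> chiv;
  val : Ev -> nat;
  gamma : Ev -> Ev
}.

Definition is_system_execution (M : Exec) : Prop :=
  (forall x, ~ lt M x x) /\
  (forall x y z, lt M x y -> lt M y z -> lt M x z) /\
  (forall x, exists l : list (Ev M), forall y, lt M y x -> In y l) /\
  (forall x, exists l : list (Ev M), forall y, ~ In y l -> lt M x y) /\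
  (forall e, Action M e -> Begin M e = e /\ End M e = e) /\
  (forall X Y, lt M X Y <-> lt M (End M X) (Begin M Y)).

Definition AddP (M : Exec) (p : chiv) (a : Ev M) := Add M a /\ chi M a = p.
Definition RemP (M : Exec) (p : chiv) (a : Ev M) := Rem M a /\ chi M a = p.
Definition CntP (M : Exec) (p : chiv) (a : Ev M) := Cnt M a /\ chi M a = p.
(* Op^p, meaningful for p in {0,1} *)
Definition OpP (M : Exec) (p : chiv) (a : Ev M) :=
  (Add M a \/ Rem M a \/ Cnt M a) /\ chi M a = p.

Definition disjoint3 (M : Exec) : Prop :=
  (forall e, ~ (Add M e /\ Rem M e)) /\
  (forall e, ~ (Add M e /\ Cnt M e)) /\
  (forall e, ~ (Rem M e /\ Cnt M e)).

Definition A0 (M : Exec) : Prop :=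
  disjoint3 M /\
  (forall e, Add M e -> Action M e) /\
  (forall e, Rem M e -> Action M e) /\
  (forall e, Cnt M e -> ~ Action M e) /\
  (forall X, Action M (Begin M X) /\ Action M (End M X)) /\
  (forall E, Cnt M E -> lt M (Begin M E) (End M E)) /\
  (forall a b, Action M a -> Action M b -> a <> b -> lt M a b \/ lt M b a).

Definition A1 (M : Exec) : Prop :=
  forall A, OpP M C1 A ->
    AddP M C0 (gamma M A) /\ val M (gamma M A) = val M A /\
    lt M (gamma M A) (End M A) /\
    ~ (exists R, RemP M C1 R /\ gamma M R = gamma M A /\
                 lt M (gamma M A) R /\ lt M R A).

Definition A2 (M : Exec) : Prop :=
  forall A B, OpP M C0 B -> AddP M C0 A -> lt M A B -> val M A = val M B ->
    exists R, RemP M C1 R /\ A = gamma M R /\ lt M R (End M B).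

Definition linear_order {T : Type} (r : T -> T -> Prop) : Prop :=
  (forall x, ~ r x x) /\
  (forall x y z, r x y -> r y z -> r x z) /\
  (forall x y, x <> y -> r x y \/ r y x).

Definition FS0 (M : Exec) (lt0 : Ev M -> Ev M -> Prop) (g : Ev M -> Ev M) :=
  linear_order lt0 /\ disjoint3 M /\
  (forall a, OpP M C1 a -> AddP M C0 (g a)).

Definition FS1 (M : Exec) (lt0 : Ev M -> Ev M -> Prop) (g : Ev M -> Ev M) :=
  forall a, OpP M C1 a ->
    lt0 (g a) a /\ AddP M C0 (g a) /\ val M a = val M (g a) /\
    ~ (exists r, RemP M C1 r /\ g r = g a /\ lt0 (g a) r /\ lt0 r a).

Definition FS2 (M : Exec) (lt0 : Ev M -> Ev M -> Prop) (g : Ev M -> Ev M) :=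
  forall a b, lt0 a b -> AddP M C0 a -> OpP M C0 b -> val M a = val M b ->
    exists r, lt0 a r /\ lt0 r b /\ RemP M C1 r /\ a = g r.

(* Main.v *)
Require Import Defs.
From Stdlib Require Import List.
From Stdlib Require Import Classical ClassicalEpsilon Lia.

Fixpoint idx {T : Type} (l : list T) (y : T) : nat :=
  match l with
  | nil => 0
  | x :: l' => if excluded_middle_informative (x = y) then 0 else S (idx l' y)
  end.

Lemma idx_inj {T : Type} (l : list T) y1 y2 :
  In y1 l -> In y2 l -> idx l y1 = idx l y2 -> y1 = y2.
Proof.
  induction l as [|x l IH]; simpl; [tauto|].
  intros H1 H2 He.
  destruct (excluded_middle_informative (x = y1)) as [e1|n1];
  destruct (excluded_middle_informative (x = y2)) as [e2|n2].
  - congruence.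
  - discriminate.
  - discriminate.
  - apply IH; [destruct H1; congruence | destruct H2; congruence | congruence].
Qed.

Definition Pw (M : Exec) (b R : Ev M) : Prop :=
  exists a, AddP M C0 a /\ val M a = val M b /\ lt M a (Begin M b) /\
    RemP M C1 R /\ gamma M R = a /\ ~ lt M R (Begin M b) /\ lt M R (End M b).

Definition spec (M : Exec) (x q : Ev M) (s : nat) : Prop :=
  (Action M x /\ q = x /\ s = 1) \/
  (~ Action M x /\ CntP M C1 x /\ lt M (gamma M x) (Begin M x) /\ q = Begin M x /\ s = 0) \/
  (~ Action M x /\ CntP M C1 x /\ ~ lt M (gamma M x) (Begin M x) /\ q = gamma M x /\ s = 2) \/
  (~ Action M x /\ CntP M C0 x /\ Pw M x q /\ s = 2) \/
  (~ Action M x /\ CntP M C0 x /\ ~ (exists R, Pw M x R) /\ q = Begin M x /\ s = 0) \/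
  (~ Action M x /\ ~ CntP M C1 x /\ ~ CntP M C0 x /\ q = Begin M x /\ s = 0).

Lemma spec_ex (M : Exec) (x : Ev M) : exists p : Ev M * nat, spec M x (fst p) (snd p).
Proof.
  unfold spec.
  destruct (classic (Action M x)) as [Ha|Ha].
  { exists (x, 1); simpl; tauto. }
  destruct (classic (CntP M C1 x)) as [Hc1|Hc1].
  { destruct (classic (lt M (gamma M x) (Begin M x))).
    - exists (Begin M x, 0); simpl; tauto.
    - exists (gamma M x, 2); simpl; tauto. }
  destruct (classic (CntP M C0 x)) as [Hc0|Hc0].
  { destruct (classic (exists R, Pw M x R)) as [[R HR]|HR].
    - exists (R, 2); simpl; tauto.
    - exists (Begin M x, 0); simpl; tauto. }
  exists (Begin M x, 0); simpl; tauto.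
Qed.

Theorem theorem3p2 (M : Exec) :
  is_system_execution M -> A0 M -> A1 M -> A2 M ->
  exists lt0 : Ev M -> Ev M -> Prop,
    (forall x y, lt M x y -> lt0 x y) /\
    FS0 M lt0 (gamma M) /\ FS1 M lt0 (gamma M) /\ FS2 M lt0 (gamma M).
Proof.
  intros HS H0 H1 H2.
  destruct HS as (Hirr & Htr & _ & Hlam & Hact & Hiff).
  destruct H0 as (Hdis & HaddA & HremA & HcntA & HBE & HcntBE & Hlin).
  pose (L := fun x => proj1_sig (constructive_indefinite_description _ (Hlam x))).
  assert (HL : forall x y, ~ In y (L x) -> lt M x y).
  { intros x y; unfold L; destruct (constructive_indefinite_description _ (Hlam x)); simpl; auto. }
  clearbody L.
  pose (K := fun x => proj1_sig (constructive_indefinite_description _ (spec_ex M x))).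
  assert (HK : forall x, spec M x (fst (K x)) (snd (K x))).
  { intros x; unfold K; destruct (constructive_indefinite_description _ (spec_ex M x)); simpl; auto. }
  clearbody K.
  pose (q := fun x => fst (K x)).
  pose (s := fun x => snd (K x)).
  assert (HK2 : forall x, spec M x (q x) (s x)) by (intro x; apply HK).
  clear HK; clearbody q s; clear K.

  assert (Hbeg : forall e, Action M e -> Begin M e = e) by (intros e He; apply (Hact e He)).
  assert (Hend : forall e, Action M e -> End M e = e) by (intros e He; apply (Hact e He)).
  assert (Hasym : forall a b, lt M a b -> lt M b a -> False)
    by (intros a b Hab Hba; exact (Hirr a (Htr _ _ _ Hab Hba))).
  assert (HBle : forall x, Begin M x = End M x \/ lt M (Begin M x) (End M x)).
  { intros x. destruct (classic (Begin M x = End M x)) as [E|E]; [now left|].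
    destruct (Hlin _ _ (proj1 (HBE x)) (proj2 (HBE x)) E) as [h|h]; [now right|].
    exfalso; apply (Hirr x); apply Hiff; exact h. }
  assert (Hnlt : forall a b, Action M a -> Action M b -> ~ lt M a b -> b = a \/ lt M b a).
  { intros a b Ha Hb Hn. destruct (classic (b = a)) as [E|E]; [now left|].
    destruct (Hlin _ _ Ha Hb (fun e => E (eq_sym e))); tauto. }
  assert (Hop1 : forall A, OpP M C1 A -> Action M A -> Defs.Add M A \/ Rem M A).
  { intros A [[h|[h|h]] _] HA; try tauto. exfalso; exact (HcntA _ h HA). }
  assert (HnA : forall A p, OpP M p A -> ~ Action M A -> CntP M p A).
  { intros A p [[h|[h|h]] hc] HA; [exfalso; auto|exfalso; auto|split; auto]. }
  assert (HS1 : forall x, Action M (q x)).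
  { intros x; destruct (HK2 x) as [(Hx&->&_)|[(_&_&_&->&_)|[(_&Hc&_&->&_)|[(_&_&(a & _ & _ & _ & [hh _] & _)&_)|[(_&_&_&->&_)|(_&_&_&->&_)]]]]];
      try apply HBE; auto.
    destruct (H1 x) as [[hh _] _]; [destruct Hc; split; auto|]. apply HaddA, hh. }
  assert (HOp1C : forall x, CntP M C1 x -> OpP M C1 x)
    by (intros x [h1 h2]; split; auto).
  assert (HS2 : forall x, Begin M x = q x \/ lt M (Begin M x) (q x)).
  { intros x; destruct (HK2 x) as [(Hx&->&_)|[(_&_&_&->&_)|[(_&Hc&Hn&->&_)|[(_&_&(a & _ & _ & _ & [hh _] & _ & Hn & _)&_)|[(_&_&_&->&_)|(_&_&_&->&_)]]]]]; auto.
    - apply Hnlt; [|apply HBE|exact Hn].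
      destruct (H1 x (HOp1C _ Hc)) as [[hh _] _]; auto.
    - apply Hnlt; [auto|apply HBE|exact Hn]. }
  assert (HS3 : forall x, q x = End M x \/ lt M (q x) (End M x)).
  { intros x; destruct (HK2 x) as [(Hx&->&_)|[(_&_&_&->&_)|[(_&Hc&Hn&->&_)|[(_&_&(a & _ & _ & _ & _ & _ & _ & Hn)&_)|[(_&_&_&->&_)|(_&_&_&->&_)]]]]]; auto.
    - left; symmetry; auto.
    - right. destruct (H1 x (HOp1C _ Hc)) as (_&_&hh&_); auto. }
  assert (HS4 : forall x, Action M x -> q x = x /\ s x = 1).
  { intros x Hx; destruct (HK2 x) as [(_&->&->)|[(Hn&_)|[(Hn&_)|[(Hn&_)|[(Hn&_)|(Hn&_)]]]]]; tauto. }
  assert (HS5 : forall x, ~ Action M x -> s x <> 1).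
  { intros x Hx; destruct (HK2 x) as [(Hn&_)|[(_&_&_&_&->)|[(_&_&_&_&->)|[(_&_&_&->)|[(_&_&_&_&->)|(_&_&_&_&->)]]]]]; try tauto; lia. }
  assert (HinL : forall x, In x (L (q x))).
  { intros x. apply NNPP; intros Hn. apply HL in Hn. apply Hiff in Hn.
    rewrite (Hend _ (HS1 x)) in Hn. destruct (HS2 x) as [e|h].
    - rewrite e in Hn; exact (Hirr _ Hn).
    - exact (Hasym _ _ h Hn). }
  pose (lt0 := fun x y => lt M (q x) (q y) \/ (q x = q y /\ (s x < s y \/ (s x = s y /\ idx (L (q x)) x < idx (L (q y)) y)))).
  assert (Hinj : forall x y, q x = q y -> s x = s y -> idx (L (q x)) x = idx (L (q y)) y -> x = y).
  { intros x y E1 E2 E3. destruct (classic (Action M x)) as [Hx|Hx].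
    - destruct (HS4 x Hx) as [e1 e2].
      assert (Hy : Action M y) by (apply NNPP; intros Hy; apply (HS5 y Hy); congruence).
      destruct (HS4 y Hy); congruence.
    - rewrite E1 in E3. apply (idx_inj (L (q y))); auto. rewrite <- E1; auto. }
  assert (Hlin0 : linear_order lt0).
  { split; [|split].
    - intros x [h|[_ [h|[_ h]]]]; [exact (Hirr _ h)|lia|lia].
    - intros x y z [h|[e h]] [h'|[e' h']]; unfold lt0.
      + left; eauto.
      + left; rewrite <- e'; auto.
      + left; rewrite e; auto.
      + right; split; [congruence|]. rewrite <- e' in *. rewrite <- e in *. lia.
    - intros x y Hxy. unfold lt0.
      destruct (classic (q x = q y)) as [e|ne].
      + rewrite <- e. destruct (PeanoNat.Nat.lt_trichotomy (s x) (s y)) as [h|[h|h]].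
        * left; right; auto.
        * destruct (PeanoNat.Nat.lt_trichotomy (idx (L (q x)) x) (idx (L (q x)) y)) as [h'|[h'|h']].
          -- left; right; auto.
          -- exfalso; apply Hxy, Hinj; congruence.
          -- right; right; auto.
        * right; right; auto.
      + destruct (Hlin _ _ (HS1 x) (HS1 y) ne); auto. }
  assert (Hact0 : forall x y, Action M x -> Action M y -> lt0 x y -> lt M x y).
  { intros x y Hx Hy [h|[e h]]; destruct (HS4 x Hx) as [ex sx]; destruct (HS4 y Hy) as [ey sy].
    - congruence.
    - exfalso. rewrite ex, ey in e. subst y. lia. }
  assert (Hact0' : forall x y, Action M x -> Action M y -> lt M x y -> lt0 x y).
  { intros x y Hx Hy h; left; destruct (HS4 x Hx) as [ex _]; destruct (HS4 y Hy) as [ey _]; congruence. }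
  assert (HRop : forall R, RemP M C1 R -> OpP M C1 R) by (intros R [h1 h2]; split; auto).
  assert (HAop : forall R, AddP M C0 R -> OpP M C0 R) by (intros R [h1 h2]; split; auto).
  assert (HRact : forall R, RemP M C1 R -> Action M R) by (intros R [h1 h2]; auto).
  assert (HAact : forall R, AddP M C0 R -> Action M R) by (intros R [h1 h2]; auto).
  assert (HRg : forall R, RemP M C1 R -> lt M (gamma M R) R).
  { intros R HR. destruct (H1 R (HRop R HR)) as (_&_&h&_). rewrite (Hend _ (HRact _ HR)) in h; exact h. }
  assert (Hle_tr : forall a b c, (a = b \/ lt M a b) -> lt M b c -> lt M a c).
  { intros a b c [->|h] h'; eauto. }
  assert (Hle_tr' : forall a b c, lt M a b -> (b = c \/ lt M b c) -> lt M a c).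
  { intros a b c h [<-|h']; eauto. }
  exists lt0. split; [|split; [|split]].
  -
    intros x y h. left. apply Hiff in h.
    apply (Hle_tr' _ (Begin M y)); [|apply HS2].
    apply (Hle_tr _ (End M x)); auto.
  -
    split; [exact Hlin0|split; [exact Hdis|]].
    intros a Ha; destruct (H1 a Ha) as [h _]; exact h.
  -
    intros a Ha. destruct (H1 a Ha) as (Hg & Hv & Hlt & Hno).
    assert (Hga : Action M (gamma M a)) by auto.
    destruct (HS4 _ Hga) as [qg sg].
    split; [|split; [exact Hg|split; [auto|]]].
    + destruct (classic (Action M a)) as [HA|HA].
      * apply Hact0'; auto. rewrite (Hend _ HA) in Hlt; exact Hlt.
      * pose proof (HnA _ _ Ha HA) as Hc.
        destruct (HK2 a) as [(Hn&_)|[(_&_&h&e&ss)|[(_&_&h&e&ss)|[(_&[_ hc]&_)|[(_&[_ hc]&_)|(_&Hn&_)]]]]].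
        -- tauto.
        -- left. congruence.
        -- right. split; [congruence|]. lia.
        -- destruct Hc; congruence.
        -- destruct Hc; congruence.
        -- tauto.
    + intros (r & Hr & Hgr & Hgr1 & Hra).
      assert (Hra' : Action M r) by auto.
      destruct (HS4 _ Hra') as [qr sr].
      assert (Hgr' : lt M (gamma M a) r) by (apply Hact0; auto).
      destruct (classic (Action M a)) as [HA|HA].
      * apply Hno; exists r; split; [auto|split; [auto|split; [exact Hgr'|apply Hact0; auto]]].
      * pose proof (HnA _ _ Ha HA) as Hc.
        destruct (HK2 a) as [(Hn&_)|[(_&_&h&e&ss)|[(_&_&h&e&ss)|[(_&[_ hc]&_)|[(_&[_ hc]&_)|(_&Hn&_)]]]]].
        -- tauto.
        -- apply Hno; exists r; split; [auto|split; [auto|split; [exact Hgr'|]]].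
           apply Hiff. rewrite (Hend _ Hra').
           destruct Hra as [h'|[e' h']]; [congruence|lia].
        -- destruct Hra as [h'|[e' h']].
           ++ rewrite qr, e in h'. exact (Hasym _ _ Hgr' h').
           ++ rewrite qr, e in e'. subst r. exact (Hirr _ Hgr').
        -- destruct Hc; congruence.
        -- destruct Hc; congruence.
        -- tauto.
  -
    intros a b Hab Ha Hb Hv.
    assert (Haa : Action M a) by auto.
    destruct (HS4 _ Haa) as [qa sa].
    destruct (classic (Action M b)) as [HB|HB].
    + assert (h : lt M a b) by (apply Hact0; auto).
      destruct (H2 a b Hb Ha h Hv) as (R & HR & e & hR).
      rewrite (Hend _ HB) in hR.
      exists R. split; [|split; [|split; auto]].
      * apply Hact0'; auto. rewrite e. apply HRg; auto.
      * apply Hact0'; auto.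
    + pose proof (HnA _ _ Hb HB) as Hc.
      destruct (HK2 b) as [(Hn&_)|[(_&[_ hc]&_)|[(_&[_ hc]&_)|[(_&_&HP&ss)|[(_&_&HnP&e&ss)|(_&_&Hn&_)]]]]].
      * tauto.
      * destruct Hc; congruence.
      * destruct Hc; congruence.
      * destruct HP as (a' & Ha' & Hv' & Hlt' & HR & Hg & HnR & HRe).
        assert (HRa : Action M (q b)) by auto.
        destruct (HS4 _ HRa) as [qR sR].
        assert (Hab' : lt M a (q b)).
        { destruct Hab as [h|[e h]]; [congruence|].
          exfalso. rewrite qa in e. subst a. destruct Hdis as [Hd _].
          apply (Hd (q b)). destruct Ha, HR; split; auto. }
        assert (HBR : Begin M b = q b \/ lt M (Begin M b) (q b)) by (apply Hnlt; auto; apply HBE).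
        assert (Haa' : Action M a') by auto.
        destruct (classic (a = a')) as [ea|na].
        { subst a'. exists (q b). split; [|split; [|split; auto]].
          - apply Hact0'; auto.
          - right. split; [congruence|]. lia. }
        destruct (Hlin _ _ Haa Haa' na) as [h|h].
        { destruct (H2 a a' (HAop _ Ha') Ha h) as (R' & HR' & e' & hR'); [congruence|].
          rewrite (Hend _ Haa') in hR'.
          exists R'. split; [|split; [|split; auto]].
          - apply Hact0'; auto. rewrite e'. apply HRg; auto.
          - left. rewrite (proj1 (HS4 _ (HRact _ HR'))).
            apply (Hle_tr' _ (Begin M b)); auto. eauto. }
        { exfalso.
          destruct (H2 a' a (HAop _ Ha) Ha' h) as (R' & HR' & e' & hR'); [congruence|].
          rewrite (Hend _ Haa) in hR'.
          destruct (H1 (q b) (HRop _ HR)) as (_&_&_&Hno).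
          apply Hno. exists R'. split; auto. split; [congruence|]. split.
          - rewrite Hg, e'. apply HRg; auto.
          - eauto. }
      * assert (h : lt M a (Begin M b)).
        { destruct Hab as [h|[e' h]]; [congruence|]. lia. }
        assert (h2 : lt M a b) by (apply Hiff; rewrite (Hend _ Haa); exact h).
        destruct (H2 a b Hb Ha h2 Hv) as (R & HR & e2 & hR).
        destruct (classic (lt M R (Begin M b))) as [hRB|hRB].
        { exists R. split; [|split; [|split; auto]].
          - apply Hact0'; auto. rewrite e2. apply HRg; auto.
          - left. rewrite (proj1 (HS4 _ (HRact _ HR))). congruence. }
        exfalso. apply HnP. exists R, a. repeat split; auto; try apply Ha; try apply HR.
      * tauto.
Qed.
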